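(* $\mathrm{FindWS}_\mathcal{A} \equiv_W \mathrm{Det}_\mathcal{A} \equiv_W \mathrm{C}_{\{0,1\}^\mathbb{N}}$.
   Context: Represented spaces: a represented space is $(X,\delta_X)$ with $\delta_X:\subseteq\mathbb{N}^\mathbb{N}\to X$ a partial surjection. For a partial multivalued $f:\subseteq X\rightrightarrows Y$, a realizer is a partial $F:\subseteq\mathbb{N}^\mathbb{N}\to\mathbb{N}^\mathbb{N}$ with $\delta_Y(F(p))\in f(\delta_X(p))$ whenever $\delta_X(p)\in\mathrm{dom}(f)$. Weihrauch reducibility: $f\leq_W g$ iff there are computable partial $K,H:\subseteq\mathbb{N}^\mathbb{N}\to\mathbb{N}^\mathbb{N}$ such that for every realizer $G$ of $g$, the map $p\mapsto K(\langle p, G(H(p))\rangle)$ is a realizer of $f$; $\equiv_W$ is the induced equivalence. Open subsets of $\{0,1\}^\mathbb{N}$ are named by enumerations of words $w$ with $U=\bigcup w\{0,1\}^\mathbb{N}$; closed sets are named by names of their complements; $\mathcal{A}$ denotes the closed sets with this representation. $\mathrm{C}_{\{0,1\}^\mathbb{N}}$ (closed choice) maps a nonempty closed $A\subseteq\{0,1\}^\mathbb{N}$ to any element of $A$. Games: all games use choice set $\{0,1\}$. A win/lose game has two players (player 1 and player 2), a turn function $d:\{0,1\}^*\to\{1,2\}$ (given as a lookup table), and a winning set $W\subseteq\{0,1\}^\mathbb{N}$ for player 1 (player 2 wins on the complement). A strategy profile is a function $s:\{0,1\}^*\to\{0,1\}$ (identified with an element of $\{0,1\}^\mathbb{N}$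 via a computable bijection $\{0,1\}^*\cong\mathbb{N}$); player $i$'s strategy is its restriction to $d^{-1}(i)$; the induced play $p$ satisfies $p_n=s(p_{<n})$. A strategy of a player is winning if every play consistent with it is won by that player. For a represented pointclass $\Gamma$, $\mathrm{Det}_\Gamma$ takes a win/lose game whose winning set for player 1 is given by a $\Gamma$-name, and outputs any Nash equilibrium, i.e.~any strategy profile in which one of the two strategies is winning. $\mathrm{FindWS}_\Gamma$ is the restriction of $\mathrm{Det}_\Gamma$ to games in which player 1 has a winning strategy. *)

(* Defs.v *)
From Stdlib Require Import Arith List.
Import ListNotations.

Definition baire := nat -> nat.

Inductive code : Type :=
| CZero : code
| CSucc : code
| CProj : nat -> code
| COracle : code
| CComp : code -> list code -> code
| CPrec : code -> code -> code
| CMin : code -> code.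

Inductive eval (o : baire) : code -> list nat -> nat -> Prop :=
| ev_zero : forall xs, eval o CZero xs 0
| ev_succ : forall x xs, eval o CSucc (x :: xs) (S x)
| ev_proj : forall i xs v, nth_error xs i = Some v -> eval o (CProj i) xs v
| ev_oracle : forall x xs, eval o COracle (x :: xs) (o x)
| ev_comp : forall f gs xs ys v,
    evals o gs xs ys -> eval o f ys v -> eval o (CComp f gs) xs v
| ev_prec0 : forall f g xs v, eval o f xs v -> eval o (CPrec f g) (0 :: xs) v
| ev_precS : forall f g n xs r v,
    eval o (CPrec f g) (n :: xs) r -> eval o g (n :: r :: xs) v ->
    eval o (CPrec f g) (S n :: xs) v
| ev_min : forall f xs n,
    eval o f (n :: xs) 0 ->
    (forall m, m < n -> exists k, eval o f (m :: xs) (S k)) ->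
    eval o (CMin f) xs n
with evals (o : baire) : list code -> list nat -> list nat -> Prop :=
| evs_nil : forall xs, evals o [] xs []
| evs_cons : forall g gs xs y ys,
    eval o g xs y -> evals o gs xs ys -> evals o (g :: gs) xs (y :: ys).

(* Partial functions on Baire space, as single-valued relations. *)
Definition single_valued (F : baire -> baire -> Prop) : Prop :=
  forall p q1 q2, F p q1 -> F p q2 -> q1 = q2.

Definition computable (F : baire -> baire -> Prop) : Prop :=
  single_valued F /\
  exists e : code, forall p q, F p q -> forall n, eval p e [n] (q n).

Definition pairB (p q : baire) : baire :=
  fun n => if Nat.even n then p (Nat.div2 n) else q (Nat.div2 n).

Record rep_space := {
  rcar : Type;
  rdelta : baire -> rcar -> Prop   (* graph of the partial representation *)
}.

(* Partial multivalued f : X => Y given by its graph; dom f = {x | f x <> empty}. *)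
Definition mv (X Y : rep_space) := rcar X -> rcar Y -> Prop.

Definition realizes (X Y : rep_space) (f : mv X Y) (F : baire -> baire -> Prop) :=
  forall p x, rdelta X p x -> (exists y, f x y) ->
    exists q, F p q /\ exists y, rdelta Y q y /\ f x y.

Definition W_le (X Y : rep_space) (f : mv X Y) (X' Y' : rep_space) (g : mv X' Y') :=
  exists K H : baire -> baire -> Prop,
    computable K /\ computable H /\
    forall G, single_valued G -> realizes X' Y' g G ->
      realizes X Y f (fun p r => exists q s, H p q /\ G q s /\ K (pairB p s) r).

Definition W_eq (X Y : rep_space) (f : mv X Y) (X' Y' : rep_space) (g : mv X' Y') :=
  W_le X Y f X' Y' g /\ W_le X' Y' g X Y f.

(* Computable bijection {0,1}^* ~ nat. *)
Fixpoint word_code (w : list bool) : nat :=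
  match w with
  | [] => 0
  | b :: w' => 2 * word_code w' + (if b then 2 else 1)
  end.

Definition is_prefix (w : list bool) (x : nat -> bool) : Prop :=
  forall i b, nth_error w i = Some b -> x i = b.

Definition bit (b : bool) : nat := if b then 1 else 0.

Definition Cantor : rep_space :=
  {| rcar := nat -> bool;
     rdelta := fun p x => forall n, p n = bit (x n) |}.

(* p enumerates words (p n = 0: no word; p n = S (word_code w): word w);
   it names the open set U = union of the cylinders w{0,1}^N. *)
Definition names_open (p : baire) (U : (nat -> bool) -> Prop) : Prop :=
  forall x, U x <-> exists n w, p n = S (word_code w) /\ is_prefix w x.

Definition names_closed (p : baire) (A : (nat -> bool) -> Prop) : Prop :=
  names_open p (fun x => ~ A x).

Definition ClosedSets : rep_space :=
  {| rcar := (nat -> bool) -> Prop; rdelta := names_closed |}.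

Definition closed_choice : mv ClosedSets Cantor := fun A x => A x.

Inductive player := P1 | P2.

Definition player_code (i : player) : nat := match i with P1 => 1 | P2 => 2 end.

Record game := {
  turn : list bool -> player;
  win1 : (nat -> bool) -> Prop
}.

Definition names_game (p : baire) (G : game) : Prop :=
  exists t a, p = pairB t a /\
    (forall w, t (word_code w) = player_code (turn G w)) /\
    names_closed a (win1 G).

Definition ClosedGames : rep_space := {| rcar := game; rdelta := names_game |}.

Definition profile := list bool -> bool.

Definition Profiles : rep_space :=
  {| rcar := profile;
     rdelta := fun q s => forall w, q (word_code w) = bit (s w) |}.

Definition prefix_of (x : nat -> bool) (n : nat) : list bool := map x (seq 0 n).

Definition consistent (G : game) (i : player) (s : profile) (x : nat -> bool) :=
  forall n, turn G (prefix_of x n) = i -> x n = s (prefix_of x n).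

Definition wins (G : game) (i : player) (x : nat -> bool) : Prop :=
  match i with P1 => win1 G x | P2 => ~ win1 G x end.

Definition winning (G : game) (i : player) (s : profile) : Prop :=
  forall x, consistent G i s x -> wins G i x.

Definition nash (G : game) (s : profile) : Prop :=
  winning G P1 s \/ winning G P2 s.

Definition Det_A : mv ClosedGames Profiles := fun G s => nash G s.

Definition FindWS_A : mv ClosedGames Profiles :=
  fun G s => (exists s', winning G P1 s') /\ nash G s.

(* Main.v *)
Require Import Defs.
From Stdlib Require Import Arith List Lia PeanoNat Classical ClassicalEpsilon FunctionalExtensionality.
Import ListNotations.

Inductive ex := EVar (i:nat) | EZero | ESucc (e:ex) | EOra (e:ex) | ERec (n b s:ex).

Fixpoint recf (b : nat) (s : nat -> nat -> nat) (m : nat) : nat :=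
  match m with 0 => b | S m' => s m' (recf b s m') end.

Fixpoint den (o:baire) (e:ex) (env:list nat) {struct e} : nat :=
  match e with
  | EVar i => nth i env 0
  | EZero => 0
  | ESucc e => S (den o e env)
  | EOra e => o (den o e env)
  | ERec n b s =>
     (fix r (m:nat) : nat := match m with 0 => den o b env
                            | S m' => den o s (m' :: r m' :: env) end) (den o n env)
  end.

Lemma den_rec o n b s env :
  den o (ERec n b s) env = recf (den o b env) (fun i a => den o s (i :: a :: env)) (den o n env).
Proof. simpl. generalize (den o n env). induction n0; simpl; congruence. Qed.

Lemma recf_ext b s s' m : (forall i a, s i a = s' i a) -> recf b s m = recf b s' m.
Proof. intro H; induction m; simpl; auto. rewrite IHm; auto. Qed.

Definition projs k := map CProj (seq 0 k).

Fixpoint comp (k:nat) (e:ex) : code :=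
 match e with
 | EVar i => if i <? k then CProj i else CZero
 | EZero => CZero
 | ESucc e => CComp CSucc [comp k e]
 | EOra e => CComp COracle [comp k e]
 | ERec n b s => CComp (CPrec (comp k b) (comp (S (S k)) s)) (comp k n :: projs k)
 end.

Lemma projs_gen o env : forall l j, j + length l = length env -> skipn j env = l ->
  evals o (map CProj (seq j (length l))) env l.
Proof.
  induction l as [|x l IH]; intros j Hl Hs; simpl. constructor.
  constructor.
  - constructor. rewrite <- (Nat.add_0_r j). 
    assert (H: nth_error (skipn j env) 0 = Some x) by (rewrite Hs; reflexivity).
    rewrite nth_error_skipn in H. exact H.
  - apply IH. simpl in Hl; lia.
    assert (H: skipn 1 (skipn j env) = l) by (rewrite Hs; reflexivity).
    rewrite skipn_skipn in H. replace (S j) with (1 + j) by lia. exact H.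
Qed.

Lemma projs_ok o env : evals o (projs (length env)) env env.
Proof. unfold projs. apply (projs_gen o env env 0); reflexivity. Qed.

Lemma comp_ok : forall e o env, eval o (comp (length env) e) env (den o e env).
Proof.
  induction e; intros o env; cbn [comp].
  - simpl. destruct (Nat.ltb_spec i (length env)).
    + constructor. apply nth_error_nth'. exact H.
    + rewrite nth_overflow by lia. constructor.
  - constructor.
  - econstructor. constructor. apply IHe. constructor. constructor.
  - econstructor. constructor. apply IHe. constructor. constructor.
  - econstructor. constructor. apply IHe1. apply projs_ok.
    rewrite den_rec.
    change (eval o (CPrec (comp (length env) e2) (comp (S (S (length env))) e3))
      (den o e1 env :: env)
      (recf (den o e2 env) (fun i a => den o e3 (i :: a :: env)) (den o e1 env))).
    generalize (den o e1 env). induction n; simpl.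
    + constructor. apply IHe2.
    + econstructor. exact IHn. apply (IHe3 o (n :: recf _ _ n :: env)).
Qed.

Fixpoint sh (c:nat) (e:ex) : ex :=
 match e with
 | EVar i => if i <? c then EVar i else EVar (S i)
 | EZero => EZero | ESucc e => ESucc (sh c e) | EOra e => EOra (sh c e)
 | ERec n b s => ERec (sh c n) (sh c b) (sh (S (S c)) s)
 end.

Lemma den_sh : forall e c o env x, c <= length env ->
  den o (sh c e) (firstn c env ++ x :: skipn c env) = den o e env.
Proof.
  induction e; intros c o env x Hc; cbn [sh].
  - simpl. destruct (Nat.ltb_spec i c); simpl.
    + rewrite app_nth1 by (rewrite length_firstn; lia).
      rewrite nth_firstn. destruct (Nat.ltb_spec i c); [reflexivity|lia].
    + rewrite app_nth2 by (rewrite length_firstn; lia).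
      rewrite length_firstn. replace (S i - Init.Nat.min c (length env)) with (S (i - c)) by lia.
      simpl. rewrite nth_skipn. f_equal. lia.
  - reflexivity.
  - simpl; rewrite IHe; auto.
  - simpl; rewrite IHe; auto.
  - rewrite !den_rec. rewrite IHe1, IHe2 by auto. apply recf_ext. intros i a.
    apply (IHe3 (S (S c)) o (i :: a :: env) x). simpl; lia.
Qed.

Lemma den_sh0 e o env x : den o (sh 0 e) (x :: env) = den o e env.
Proof. apply (den_sh e 0 o env x). lia. Qed.

Lemma den_sh1 e o y env x : den o (sh 1 e) (y :: x :: env) = den o e (y :: env).
Proof. apply (den_sh e 1 o (y :: env) x). simpl; lia. Qed.

Fixpoint ENat n := match n with 0 => EZero | S n => ESucc (ENat n) end.
Lemma den_nat o n env : den o (ENat n) env = n.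
Proof. induction n; simpl; auto. Qed.

Definition EPred e := ERec e EZero (EVar 0).
Lemma den_pred o e env : den o (EPred e) env = pred (den o e env).
Proof. unfold EPred; rewrite den_rec. destruct (den o e env); reflexivity. Qed.

Definition EAdd a b := ERec b a (ESucc (EVar 1)).
Lemma den_add o a b env : den o (EAdd a b) env = den o a env + den o b env.
Proof. unfold EAdd; rewrite den_rec. simpl.
  generalize (den o b env) (den o a env). intros n A. induction n as [|n IH]. simpl; lia.
  cbn [recf]; rewrite IH; lia. Qed.

Definition ESub a b := ERec b a (EPred (EVar 1)).
Lemma den_sub o a b env : den o (ESub a b) env = den o a env - den o b env.
Proof. unfold ESub; rewrite den_rec.
  erewrite recf_ext by (intros; rewrite den_pred; reflexivity). simpl.
  generalize (den o b env) (den o a env). intros n A. induction n as [|n IH]. simpl; lia.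
  cbn [recf]; rewrite IH; lia. Qed.

Definition EMul a b := ERec b EZero (EAdd (EVar 1) (sh 0 (sh 0 a))).
Lemma den_mul o a b env : den o (EMul a b) env = den o a env * den o b env.
Proof. unfold EMul; rewrite den_rec.
  erewrite recf_ext by (intros; rewrite den_add, (den_sh0 (sh 0 a)), (den_sh0 a); reflexivity). simpl.
  generalize (den o b env) (den o a env). intros n A. induction n as [|n IH]. simpl; lia.
  cbn [recf]; rewrite IH; lia. Qed.

Definition EPow2 e := ERec e (ENat 1) (EAdd (EVar 1) (EVar 1)).
Lemma den_pow2 o e env : den o (EPow2 e) env = 2 ^ den o e env.
Proof. unfold EPow2; rewrite den_rec.
  erewrite recf_ext by (intros; rewrite den_add; reflexivity). simpl.
  generalize (den o e env). intros n. induction n as [|n IH]. simpl; lia.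
  cbn [recf]; rewrite IH; simpl; lia. Qed.

Definition ENot a := ESub (ENat 1) a.
Definition EAnd a b := EMul a b.
Definition EOr a b := EAdd a b.
Definition EEq a b := ENot (EAdd (ESub a b) (ESub b a)).
Definition ELt a b := ESub b a.
Definition EImp a b := EOr (ENot a) b.

Definition truth o e env := den o e env <> 0.

Lemma t_not o a env : truth o (ENot a) env <-> ~ truth o a env.
Proof. unfold truth, ENot; rewrite den_sub, den_nat. lia. Qed.
Lemma t_and o a b env : truth o (EAnd a b) env <-> truth o a env /\ truth o b env.
Proof. unfold truth, EAnd; rewrite den_mul. rewrite Nat.mul_eq_0. tauto. Qed.
Lemma t_or o a b env : truth o (EOr a b) env <-> truth o a env \/ truth o b env.
Proof. unfold truth, EOr; rewrite den_add. lia. Qed.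
Lemma t_imp o a b env : truth o (EImp a b) env <-> (truth o a env -> truth o b env).
Proof. unfold EImp; rewrite t_or, t_not. unfold truth. lia. Qed.
Lemma t_eq o a b env : truth o (EEq a b) env <-> den o a env = den o b env.
Proof. unfold EEq; rewrite t_not; unfold truth; rewrite den_add, !den_sub. lia. Qed.
Lemma t_lt o a b env : truth o (ELt a b) env <-> den o a env < den o b env.
Proof. unfold truth, ELt; rewrite den_sub. lia. Qed.

Definition EEx n body := ERec n EZero (EOr (EVar 1) (sh 1 body)).
Lemma t_ex o n body env : truth o (EEx n body) env <-> exists i, i < den o n env /\ truth o body (i :: env).
Proof. unfold EEx; unfold truth at 1; rewrite den_rec.
  erewrite recf_ext by (intros; unfold EOr; rewrite den_add, den_sh1; reflexivity). simpl.
  generalize (den o n env) as k. intro k. induction k as [|m IH]; cbn [recf].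
  - split; [lia| intros [i [Hi _]]; lia].
  - split.
    + intro H. destruct (Nat.eq_dec (recf 0 (fun i a => a + den o body (i :: env)) m) 0) as [E|E].
      * exists m; split; [lia|]. unfold truth; lia.
      * destruct (proj1 IH E) as [i [Hi Ht]]. exists i; split; [lia|auto].
    + intros [i [Hi Ht]]. unfold truth in Ht.
      destruct (Nat.eq_dec i m). subst; lia.
      assert (recf 0 (fun i a => a + den o body (i :: env)) m <> 0) by (apply IH; exists i; split; [lia|auto]). lia.
Qed.

Definition EAll n body := ENot (EEx n (ENot body)).
Lemma t_all o n body env : truth o (EAll n body) env <-> forall i, i < den o n env -> truth o body (i :: env).
Proof. unfold EAll; rewrite t_not, t_ex. split.
  - intros H i Hi. destruct (Nat.eq_dec (den o body (i::env)) 0) as [E|E]; [|exact E].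
    exfalso; apply H; exists i; split; auto. rewrite t_not. unfold truth; lia.
  - intros H [i [Hi Ht]]. rewrite t_not in Ht. auto.
Qed.

Definition EPar e := ERec e EZero (ENot (EVar 1)).
Lemma den_par o e env : den o (EPar e) env = Nat.b2n (Nat.odd (den o e env)).
Proof. unfold EPar; rewrite den_rec.
  erewrite recf_ext by (intros; unfold ENot; rewrite den_sub, den_nat; reflexivity). simpl.
  generalize (den o e env) as k. intro k. induction k as [|m IH]; cbn [recf]. reflexivity. rewrite IH, Nat.odd_succ, <- Nat.negb_odd.
  destruct (Nat.odd m); reflexivity. Qed.

Definition EHalf e := ERec e EZero (EAdd (EVar 1) (EPar (EVar 0))).
Lemma den_half o e env : den o (EHalf e) env = Nat.div2 (den o e env).
Proof. unfold EHalf; rewrite den_rec.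
  erewrite recf_ext by (intros; rewrite den_add, den_par; reflexivity). simpl.
  generalize (den o e env) as k. intro k. induction k as [|m IH]; cbn [recf]. reflexivity. rewrite IH.
  pose proof (Nat.div2_odd m) as H1. pose proof (Nat.div2_odd (S m)) as H2.
  rewrite Nat.odd_succ, <- Nat.negb_odd in H2. destruct (Nat.odd m); simpl in *; lia. Qed.

Fixpoint tb (v j : nat) : bool := match j with 0 => Nat.odd v | S j => tb (Nat.div2 v) j end.

Definition EBit v j := EPar (ERec j v (EHalf (EVar 1))).
Lemma den_bit o v j env : den o (EBit v j) env = Nat.b2n (tb (den o v env) (den o j env)).
Proof. unfold EBit; rewrite den_par, den_rec.
  erewrite recf_ext by (intros; rewrite den_half; reflexivity). simpl.
  generalize (den o v env) (den o j env). intros v' k. revert v'. induction k as [|m IH]; intro v'; cbn [recf tb]. reflexivity.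
  rewrite <- IH. f_equal. clear IH. f_equal. revert v'. induction m; intro v'; cbn [recf]. reflexivity. rewrite IHm. reflexivity. Qed.

Lemma all_iff (b:nat) (P Q : nat -> Prop) : (forall i, i < b -> (P i <-> Q i)) ->
  ((forall i, i < b -> P i) <-> (forall i, i < b -> Q i)).
Proof. intro H; split; intros H' i Hi; apply H; auto. Qed.
Lemma ex_iff (b:nat) (P Q : nat -> Prop) : (forall i, i < b -> (P i <-> Q i)) ->
  ((exists i, i < b /\ P i) <-> (exists i, i < b /\ Q i)).
Proof. intro H; split; intros [i [Hi H']]; exists i; split; auto; apply H; auto. Qed.

Lemma den_ora o e env : den o (EOra e) env = o (den o e env).
Proof. reflexivity. Qed.
Lemma den_succ o e env : den o (ESucc e) env = S (den o e env).
Proof. reflexivity. Qed.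
Lemma den_v0 o x env : den o (EVar 0) (x :: env) = x.
Proof. reflexivity. Qed.
Lemma den_v1 o x y env : den o (EVar 1) (x :: y :: env) = y.
Proof. reflexivity. Qed.

Ltac dsimp := repeat first [rewrite den_add | rewrite den_sub | rewrite den_mul | rewrite den_pow2
  | rewrite den_nat | rewrite den_bit | rewrite den_ora | rewrite den_succ | rewrite den_v0 | rewrite den_v1].

Fixpoint pv (u i : nat) : nat := match i with 0 => 0 | S i => pv u i + Nat.b2n (tb u i) * 2 ^ i end.
Definition wcu u i := 2 ^ i - 1 + pv u i.
Definition consM (o:baire) who v u n := forall i, i < n ->
  (o (2 * wcu u i) = who -> Nat.b2n (tb u i) = Nat.b2n (tb v (wcu u i))).
Definition hitM (o:baire) u n := exists m, m < n /\ exists i, i < S n /\ o (2 * m + 1) = S (wcu u i).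
Definition refM o v n := exists u, u < 2 ^ n /\ (consM o 1 v u n /\ hitM o u n).
Definition forM o v n := forall u, u < 2 ^ n -> (consM o 2 v u n -> hitM o u n).
Definition DM o n := forall v, v < 2 ^ (2 ^ n - 1) -> refM o v n.
Definition BadM o n v := (~ DM o n /\ refM o v n) \/ (DM o n /\ ~ forM o v n).
Definition hgoodM o N := exists n, n < S N /\ exists v, v < 2 ^ (2 ^ n - 1) /\
   (N = 2 ^ (2 ^ n - 1) - 1 + v /\ BadM o n v).

Definition sh0 := sh 0.

Definition pvE u i := ERec i EZero (EAdd (EVar 1) (EMul (EBit (sh0 (sh0 u)) (EVar 0)) (EPow2 (EVar 0)))).
Lemma den_pvE o u i env : den o (pvE u i) env = pv (den o u env) (den o i env).
Proof. unfold pvE. rewrite den_rec.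
  generalize (den o i env). intro k. induction k as [|k IH]; cbn [recf pv]. reflexivity.
  rewrite IH. dsimp. unfold sh0; rewrite (den_sh0 (sh 0 u)), (den_sh0 u). reflexivity. Qed.

Definition wcuE u i := EAdd (ESub (EPow2 i) (ENat 1)) (pvE u i).
Lemma den_wcuE o u i env : den o (wcuE u i) env = wcu (den o u env) (den o i env).
Proof. unfold wcuE. dsimp. rewrite den_pvE. reflexivity. Qed.

Definition consE who v u n := EAll n (EImp (EEq (EOra (EMul (ENat 2) (wcuE (sh0 u) (EVar 0)))) (ENat who))
   (EEq (EBit (sh0 u) (EVar 0)) (EBit (sh0 v) (wcuE (sh0 u) (EVar 0))))).
Lemma t_consE o who v u n env : truth o (consE who v u n) env <->
   consM o who (den o v env) (den o u env) (den o n env).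
Proof. unfold consE, consM. rewrite t_all. apply all_iff. intros i _.
  rewrite t_imp, !t_eq. dsimp. rewrite !den_wcuE. unfold sh0; rewrite !den_sh0. dsimp. tauto. Qed.

Definition hitE u n := EEx n (EEx (ESucc (sh0 n)) (EEq (EOra (EAdd (EMul (ENat 2) (EVar 1)) (ENat 1)))
   (ESucc (wcuE (sh0 (sh0 u)) (EVar 0))))).
Lemma t_hitE o u n env : truth o (hitE u n) env <-> hitM o (den o u env) (den o n env).
Proof. unfold hitE, hitM. rewrite t_ex. apply ex_iff. intros m _.
  rewrite t_ex. unfold sh0; rewrite den_succ, den_sh0. apply ex_iff. intros i _.
  rewrite t_eq. dsimp. rewrite den_wcuE, (den_sh0 (sh 0 u)), den_sh0. dsimp. tauto. Qed.

Definition refE v n := EEx (EPow2 n) (EAnd (consE 1 (sh0 v) (EVar 0) (sh0 n)) (hitE (EVar 0) (sh0 n))).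
Lemma t_refE o v n env : truth o (refE v n) env <-> refM o (den o v env) (den o n env).
Proof. unfold refE, refM. rewrite t_ex. dsimp. apply ex_iff. intros u _.
  rewrite t_and, t_consE, t_hitE. unfold sh0; rewrite !den_sh0. dsimp. tauto. Qed.

Definition forE v n := EAll (EPow2 n) (EImp (consE 2 (sh0 v) (EVar 0) (sh0 n)) (hitE (EVar 0) (sh0 n))).
Lemma t_forE o v n env : truth o (forE v n) env <-> forM o (den o v env) (den o n env).
Proof. unfold forE, forM. rewrite t_all. dsimp. apply all_iff. intros u _.
  rewrite t_imp, t_consE, t_hitE. unfold sh0; rewrite !den_sh0. dsimp. tauto. Qed.

Definition DE n := EAll (EPow2 (ESub (EPow2 n) (ENat 1))) (refE (EVar 0) (sh0 n)).
Lemma t_DE o n env : truth o (DE n) env <-> DM o (den o n env).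
Proof. unfold DE, DM. rewrite t_all. dsimp. apply all_iff. intros v _.
  rewrite t_refE. unfold sh0; rewrite !den_sh0. dsimp. tauto. Qed.

Definition BadE n v := EOr (EAnd (ENot (DE n)) (refE v n)) (EAnd (DE n) (ENot (forE v n))).
Lemma t_BadE o n v env : truth o (BadE n v) env <-> BadM o (den o n env) (den o v env).
Proof. unfold BadE, BadM. rewrite t_or, !t_and, !t_not, t_DE, t_refE, t_forE. tauto. Qed.

Definition hgoodE N := EEx (ESucc N) (EEx (EPow2 (ESub (EPow2 (EVar 0)) (ENat 1)))
  (EAnd (EEq (sh0 (sh0 N)) (EAdd (ESub (EPow2 (ESub (EPow2 (EVar 1)) (ENat 1))) (ENat 1)) (EVar 0)))
        (BadE (EVar 1) (EVar 0)))).
Lemma t_hgoodE o N env : truth o (hgoodE N) env <-> hgoodM o (den o N env).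
Proof. unfold hgoodE, hgoodM. rewrite t_ex. dsimp. apply ex_iff. intros n _.
  rewrite t_ex. dsimp. apply ex_iff. intros v _.
  rewrite t_and, t_eq, t_BadE. unfold sh0; rewrite !den_sh0. dsimp. tauto. Qed.

Definition hE := EMul (ENot (ENot (hgoodE (EVar 0)))) (ESucc (EVar 0)).
Definition hfun o N := den o hE [N].

Lemma hfun_spec o N : (hgoodM o N -> hfun o N = S N) /\ (~ hgoodM o N -> hfun o N = 0).
Proof. unfold hfun, hE. rewrite den_mul, den_succ, den_v0.
  pose proof (t_hgoodE o (EVar 0) [N]) as H. unfold truth in H. rewrite den_v0 in H.
  unfold ENot. rewrite !den_sub, !den_nat. split; intro H1.
  - pose proof (proj2 H H1). lia.
  - destruct (Nat.eq_dec (den o (hgoodE (EVar 0)) [N]) 0) as [E|E].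
    + rewrite E. reflexivity.
    + exfalso. exact (H1 (proj1 H E)).
Qed.

Lemma hfun_code : exists e, forall o N, eval o e [N] (hfun o N).
Proof. exists (comp 1 hE). intros. apply (comp_ok hE o [N]). Qed.

Fixpoint val (w : list bool) : nat := match w with [] => 0 | b :: w => Nat.b2n b + 2 * val w end.

Lemma pow2_pos n : 1 <= 2 ^ n.
Proof. induction n; simpl; lia. Qed.

Lemma code_val w : word_code w = 2 ^ length w - 1 + val w.
Proof. induction w as [|b w IH]; simpl. reflexivity. pose proof (pow2_pos (length w)).
  rewrite IH. destruct b; simpl; lia. Qed.

Lemma val_lt w : val w < 2 ^ length w.
Proof. induction w as [|b w IH]; simpl. lia. destruct b; simpl; lia. Qed.

Lemma tb_val w j : tb (val w) j = nth j w false.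
Proof. revert j; induction w as [|b w IH]; intro j.
  - cbn [val]. destruct j; [reflexivity|]. cbn [nth]. revert j. induction j; cbn [tb]; auto.
  - destruct j; cbn [tb val nth].
    + rewrite Nat.odd_add_mul_2. destruct b; reflexivity.
    + rewrite <- IH. f_equal. destruct b; cbn [Nat.b2n].
      * change (1 + 2 * val w) with (S (2 * val w)). apply Nat.div2_succ_double.
      * apply Nat.div2_double.
Qed.

Lemma prefix_S y n : prefix_of y (S n) = prefix_of y n ++ [y n].
Proof. unfold prefix_of. rewrite seq_S, map_app. reflexivity. Qed.
Lemma prefix_len y n : length (prefix_of y n) = n.
Proof. unfold prefix_of. rewrite length_map, length_seq. reflexivity. Qed.
Lemma prefix_nth y n j : j < n -> nth j (prefix_of y n) false = y j.
Proof. intro H. unfold prefix_of. rewrite nth_indep with (d' := y 0) by (rewrite length_map, length_seq; lia).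
  rewrite map_nth, seq_nth by lia. reflexivity. Qed.

Lemma val_app l b : val (l ++ [b]) = val l + Nat.b2n b * 2 ^ length l.
Proof. induction l as [|c l IH]; simpl. destruct b; simpl; lia. rewrite IH. lia. Qed.

Lemma val_prefix_S y i : val (prefix_of y (S i)) = val (prefix_of y i) + Nat.b2n (y i) * 2 ^ i.
Proof. rewrite prefix_S, val_app, prefix_len. reflexivity. Qed.

Lemma tb_prefix y n j : j < n -> tb (val (prefix_of y n)) j = y j.
Proof. intro; rewrite tb_val, prefix_nth; auto. Qed.

Lemma pv_prefix y n i : i <= n -> pv (val (prefix_of y n)) i = val (prefix_of y i).
Proof. induction i; intro H; cbn [pv]. reflexivity. rewrite IHi by lia. rewrite tb_prefix by lia.
  rewrite val_prefix_S. reflexivity. Qed.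

Lemma wcu_prefix y n i : i <= n -> wcu (val (prefix_of y n)) i = word_code (prefix_of y i).
Proof. intro H. unfold wcu. rewrite pv_prefix, code_val, prefix_len; auto. Qed.

Lemma val_bits u n : u < 2 ^ n -> val (prefix_of (tb u) n) = u.
Proof. revert u; induction n; intros u H; simpl in *. lia.
  unfold prefix_of. simpl. rewrite <- seq_shift, map_map. simpl.
  change (map (fun x => tb (Nat.div2 u) x) (seq 0 n)) with (prefix_of (tb (Nat.div2 u)) n).
  rewrite IHn. pose proof (Nat.div2_odd u). lia.
  pose proof (Nat.div2_odd u). destruct (Nat.odd u); simpl in *; lia.
Qed.

Lemma code_prefix_lt y i n : i < n -> word_code (prefix_of y i) < 2 ^ n - 1.
Proof. intro H. rewrite code_val, prefix_len. pose proof (val_lt (prefix_of y i)). rewrite prefix_len in H0.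
  assert (2 ^ (S i) <= 2 ^ n) by (apply Nat.pow_le_mono_r; lia). simpl in H1. lia. Qed.

Section Sem.
Variable G : game.
Variable a : baire.

Definition consS (who : player) (s : profile) (y : nat -> bool) n :=
  forall i, i < n -> turn G (prefix_of y i) = who -> y i = s (prefix_of y i).
Definition hitS (y : nat -> bool) n := exists m, m < n /\ exists i, i < S n /\ a m = S (word_code (prefix_of y i)).
Definition refS s n := exists y, consS P1 s y n /\ hitS y n.
Definition forS s n := forall y, consS P2 s y n -> hitS y n.
Definition sx (x : nat -> bool) : profile := fun w => x (word_code w).
Definition DS n := forall x, refS (sx x) n.
Definition BadS x n := (~ DS n /\ refS (sx x) n) \/ (DS n /\ ~ forS (sx x) n).
End Sem.

Definition vx (x : nat -> bool) n := val (prefix_of x (2 ^ n - 1)).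

Section Bridge.
Variable G : game.
Variables (o a : baire).
Hypothesis Ht : forall w, o (2 * word_code w) = player_code (turn G w).
Hypothesis Ha : forall m, o (2 * m + 1) = a m.

Lemma b2n_inj b c : Nat.b2n b = Nat.b2n c <-> b = c.
Proof. destruct b, c; simpl; split; congruence. Qed.

Lemma cons_bridge who x y n :
  consM o (player_code who) (vx x n) (val (prefix_of y n)) n <-> consS G who (sx x) y n.
Proof. unfold consM, consS. apply all_iff. intros i Hi.
  rewrite wcu_prefix by lia. rewrite Ht. rewrite tb_prefix by auto.
  unfold vx, sx. rewrite tb_prefix by (apply code_prefix_lt; auto). rewrite b2n_inj.
  assert (player_code (turn G (prefix_of y i)) = player_code who <-> turn G (prefix_of y i) = who)
    by (destruct (turn G (prefix_of y i)), who; simpl; split; congruence). tauto.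
Qed.

Lemma hit_bridge y n : hitM o (val (prefix_of y n)) n <-> hitS a y n.
Proof. unfold hitM, hitS. apply ex_iff. intros m _. rewrite Ha. apply ex_iff. intros i Hi.
  rewrite wcu_prefix by lia. tauto. Qed.

Lemma ref_bridge x n : refM o (vx x n) n <-> refS G a (sx x) n.
Proof. unfold refM, refS. split.
  - intros [u [Hu [Hc Hh]]]. exists (tb u). rewrite <- (val_bits u n Hu) in Hc, Hh.
    change 1 with (player_code P1) in Hc. rewrite cons_bridge in Hc. rewrite hit_bridge in Hh. auto.
  - intros [y [Hc Hh]]. exists (val (prefix_of y n)). split.
    pose proof (val_lt (prefix_of y n)); rewrite prefix_len in H; auto.
    change 1 with (player_code P1). rewrite cons_bridge, hit_bridge. auto.
Qed.

Lemma for_bridge x n : forM o (vx x n) n <-> forS G a (sx x) n.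
Proof. unfold forM, forS. split.
  - intros H y Hc. rewrite <- hit_bridge. apply H.
    pose proof (val_lt (prefix_of y n)); rewrite prefix_len in H0; auto.
    change 2 with (player_code P2). rewrite cons_bridge. auto.
  - intros H u Hu Hc. rewrite <- (val_bits u n Hu) in Hc |- *.
    change 2 with (player_code P2) in Hc. rewrite cons_bridge in Hc. rewrite hit_bridge. auto.
Qed.

Lemma vx_lt x n : vx x n < 2 ^ (2 ^ n - 1).
Proof. unfold vx. pose proof (val_lt (prefix_of x (2 ^ n - 1))). rewrite prefix_len in H. auto. Qed.

Lemma vx_bits v n : v < 2 ^ (2 ^ n - 1) -> vx (tb v) n = v.
Proof. intro H. unfold vx. apply val_bits. auto. Qed.

Lemma D_bridge n : DM o n <-> DS G a n.
Proof. unfold DM, DS. split.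
  - intros H x. rewrite <- ref_bridge. apply H, vx_lt.
  - intros H v Hv. rewrite <- (vx_bits v n Hv). rewrite ref_bridge. apply H.
Qed.

Lemma Bad_bridge x n : BadM o n (vx x n) <-> BadS G a x n.
Proof. unfold BadM, BadS. rewrite D_bridge, ref_bridge, for_bridge. tauto. Qed.

Lemma is_prefix_iff w x : is_prefix w x <-> prefix_of x (length w) = w.
Proof. split.
  - intro H. apply nth_ext with (d := false) (d' := false). rewrite prefix_len; auto.
    intros j Hj. rewrite prefix_len in Hj. rewrite prefix_nth by auto.
    apply H. apply nth_error_nth'. auto.
  - intros H i b Hib. assert (i < length w) by (apply nth_error_Some; congruence).
    apply nth_error_nth with (d := false) in Hib. rewrite <- H in Hib. rewrite prefix_nth in Hib; auto.
Qed.

Lemma pow_code_inj p q x y : x < 2 ^ p -> y < 2 ^ q -> 2 ^ p - 1 + x = 2 ^ q - 1 + y -> p = q /\ x = y.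
Proof. intros Hx Hy E. pose proof (pow2_pos p). pose proof (pow2_pos q).
  destruct (Nat.lt_trichotomy p q) as [Hpq|[Hpq|Hpq]].
  - assert (2 ^ (S p) <= 2 ^ q) by (apply Nat.pow_le_mono_r; lia). simpl in H1. lia.
  - subst. lia.
  - assert (2 ^ (S q) <= 2 ^ p) by (apply Nat.pow_le_mono_r; lia). simpl in H1. lia.
Qed.

Lemma n_le_pow n : n <= 2 ^ n - 1.
Proof. induction n; simpl; [lia|]. pose proof (pow2_pos n). lia. Qed.

Lemma hfun_bridge x : (exists m w, hfun o m = S (word_code w) /\ is_prefix w x) <-> exists n, BadS G a x n.
Proof. split.
  - intros [m [w [Hm Hp]]]. destruct (hfun_spec o m) as [H1 H2].
    destruct (classic (hgoodM o m)) as [Hg|Hg]; [|rewrite H2 in Hm by auto; discriminate].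
    rewrite H1 in Hm by auto. injection Hm as Hm. subst m.
    destruct Hg as [n [_ [v [Hv [E HB]]]]]. rewrite code_val in E.
    apply pow_code_inj in E; [|apply val_lt|auto]. destruct E as [E1 E2].
    exists n. rewrite <- Bad_bridge. unfold vx. rewrite <- E1. apply is_prefix_iff in Hp. rewrite Hp.
    rewrite E2. auto.
  - intros [n Hn]. rewrite <- Bad_bridge in Hn.
    exists (word_code (prefix_of x (2 ^ n - 1))), (prefix_of x (2 ^ n - 1)). split.
    + apply (proj1 (hfun_spec o _)). exists n. split.
      * rewrite code_val, prefix_len. pose proof (n_le_pow n). pose proof (n_le_pow (2 ^ n - 1)). lia.
      * exists (vx x n). split. apply vx_lt. split; auto. rewrite code_val, prefix_len. reflexivity.
    + apply is_prefix_iff. rewrite prefix_len. reflexivity.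
Qed.
End Bridge.

Fixpoint dec (f N : nat) : list bool :=
  match f with 0 => [] | S f => match N with 0 => [] | S N' => Nat.odd N' :: dec f (Nat.div2 N') end end.
Definition decode N := dec N N.

Lemma dec_code w : forall f, word_code w <= f -> dec f (word_code w) = w.
Proof. induction w as [|b w IH]; intros f H.
  - destruct f; reflexivity.
  - assert (E: word_code (b :: w) = S (Nat.b2n b + 2 * word_code w))
      by (cbn [word_code]; destruct b; cbn [Nat.b2n]; lia).
    rewrite E in *. destruct f as [|f]. lia. cbn [dec].
    rewrite Nat.odd_add_mul_2. f_equal. destruct b; reflexivity.
    assert (D2: Nat.div2 (Nat.b2n b + 2 * word_code w) = word_code w).
    { destruct b; cbn [Nat.b2n].
      + change (1 + 2 * word_code w) with (S (2 * word_code w)); apply Nat.div2_succ_double.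
      + rewrite Nat.add_0_l; apply Nat.div2_double. }
    rewrite D2. apply IH. lia.
Qed.

Lemma decode_code w : decode (word_code w) = w.
Proof. apply dec_code. lia. Qed.

Definition pt (s : profile) : nat -> bool := fun N => s (decode N).
Lemma sx_pt s w : sx (pt s) w = s w.
Proof. unfold sx, pt. rewrite decode_code. reflexivity. Qed.

Fixpoint pl (f : nat -> list bool -> bool) (n : nat) : list bool :=
  match n with 0 => [] | S n => pl f n ++ [f n (pl f n)] end.
Definition play f n := f n (pl f n).
Lemma prefix_play f n : prefix_of (play f) n = pl f n.
Proof. induction n; simpl. reflexivity. rewrite prefix_S, IHn. reflexivity. Qed.

Lemma prefix_ext y y' i : (forall j, j < i -> y j = y' j) -> prefix_of y i = prefix_of y' i.
Proof. intro H. unfold prefix_of. apply map_ext_in. intros j Hj. apply in_seq in Hj. apply H. lia. Qed.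

Section Game.
Variable G : game.
Variable a : baire.

Lemma hit_mono y n n' : hitS a y n -> n <= n' -> hitS a y n'.
Proof. intros [m [Hm [i [Hi E]]]] H. exists m; split; [lia|]. exists i; split; [lia|auto]. Qed.

Lemma hit_ext y y' n : (forall j, j < n -> y j = y' j) -> hitS a y n -> hitS a y' n.
Proof. intros H [m [Hm [i [Hi E]]]]. exists m; split; auto. exists i; split; auto.
  rewrite <- (prefix_ext y y' i); auto. intros; apply H; lia. Qed.

Lemma cons_ext who s s' y n : (forall w, turn G w = who -> s w = s' w) ->
  consS G who s y n -> consS G who s' y n.
Proof. intros H Hc i Hi Ht. rewrite <- H by auto. apply Hc; auto. Qed.

Lemma cons_restr who s y n n' : consS G who s y n' -> n <= n' -> consS G who s y n.
Proof. intros H Hn i Hi. apply H. lia. Qed.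

Lemma ref_mono s n n' : refS G a s n -> n <= n' -> refS G a s n'.
Proof. intros [y [Hc Hh]] Hn.
  set (f := fun i w => if i <? n then y i else s w).
  assert (Hp : forall i, i <= n -> prefix_of (play f) i = prefix_of y i).
  { intros i Hi. apply prefix_ext. intros j Hj. unfold play, f.
    destruct (Nat.ltb_spec j n); [reflexivity|lia]. }
  exists (play f). split.
  - intros i Hi Ht. unfold play at 1. unfold f at 1. rewrite <- prefix_play.
    destruct (Nat.ltb_spec i n).
    + rewrite Hp in * by lia. apply Hc; auto.
    + reflexivity.
  - apply hit_mono with n; auto. apply hit_ext with y; auto.
    intros j Hj. unfold play, f. destruct (Nat.ltb_spec j n); [reflexivity|lia].
Qed.

Lemma for_mono s n n' : forS G a s n -> n <= n' -> forS G a s n'.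
Proof. intros H Hn y Hc. apply hit_mono with n; auto. apply H. eapply cons_restr; eauto. Qed.

Lemma ref_ext s s' n : (forall w, turn G w = P1 -> s w = s' w) -> refS G a s n -> refS G a s' n.
Proof. intros H [y [Hc Hh]]. exists y; split; auto. eapply cons_ext; eauto. Qed.

Lemma for_ext s s' n : (forall w, turn G w = P2 -> s w = s' w) -> forS G a s n -> forS G a s' n.
Proof. intros H Hf y Hc. apply Hf. eapply cons_ext; [|eauto]. intros; symmetry; auto. Qed.

Lemma D_mono n n' : DS G a n -> n <= n' -> DS G a n'.
Proof. intros H Hn x. eapply ref_mono; eauto. Qed.

Section Fin.
Variable n : nat.
Definition hitL (w : list bool) := exists m, m < n /\ exists i, i < S n /\ a m = S (word_code (firstn i w)).

Fixpoint win2 (d : nat) (w : list bool) : Prop :=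
  match d with 0 => hitL w
  | S d => match turn G w with
           | P2 => win2 d (w ++ [true]) \/ win2 d (w ++ [false])
           | P1 => win2 d (w ++ [true]) /\ win2 d (w ++ [false]) end end.

Definition tau (w : list bool) : bool :=
  if excluded_middle_informative (win2 (n - S (length w)) (w ++ [true])) then true else false.
Definition sigS (w : list bool) : bool :=
  if excluded_middle_informative (win2 (n - S (length w)) (w ++ [true])) then false else true.

Lemma firstn_prefix y i k : i <= k -> firstn i (prefix_of y k) = prefix_of y i.
Proof. intro H. unfold prefix_of. rewrite firstn_map. f_equal.
  replace k with (i + (k - i)) by lia. rewrite seq_app, firstn_app, length_seq, Nat.sub_diag.
  simpl. rewrite app_nil_r, firstn_all2 by (rewrite length_seq; lia). reflexivity. Qed.

Lemma hitL_iff y : hitL (prefix_of y n) <-> hitS a y n.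
Proof. unfold hitL, hitS. split; intros [m [Hm [i [Hi E]]]]; exists m; split; auto; exists i; split; auto;
  rewrite firstn_prefix in * by lia; auto. Qed.

Lemma lemA : forall d k y, k + d = n -> win2 d (prefix_of y k) ->
  (forall i, k <= i < n -> turn G (prefix_of y i) = P2 -> y i = tau (prefix_of y i)) ->
  hitL (prefix_of y n).
Proof. induction d; intros k y Hk Hw Hc; simpl in Hw.
  - replace n with k by lia. auto.
  - apply (IHd (S k)); [lia| |intros; apply Hc; auto; lia]. rewrite prefix_S.
    revert Hw; destruct (turn G (prefix_of y k)) eqn:T; intro Hw; cbn iota in Hw.
    + destruct (y k); tauto.
    + rewrite Hc by (auto; lia). unfold tau. rewrite prefix_len.
      replace (n - S k) with d by lia.
      destruct (excluded_middle_informative (win2 d (prefix_of y k ++ [true]))); tauto.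
Qed.

Lemma lemB : forall d k y, k + d = n -> ~ win2 d (prefix_of y k) ->
  (forall i, k <= i < n -> turn G (prefix_of y i) = P1 -> y i = sigS (prefix_of y i)) ->
  ~ hitL (prefix_of y n).
Proof. induction d; intros k y Hk Hw Hc; simpl in Hw.
  - replace n with k by lia. auto.
  - apply (IHd (S k)); [lia| |intros; apply Hc; auto; lia]. rewrite prefix_S.
    revert Hw; destruct (turn G (prefix_of y k)) eqn:T; intro Hw; cbn iota in Hw.
    + rewrite Hc by (auto; lia). unfold sigS. rewrite prefix_len.
      replace (n - S k) with d by lia.
      destruct (excluded_middle_informative (win2 d (prefix_of y k ++ [true]))); tauto.
    + destruct (y k); tauto.
Qed.

Lemma fin_det : (exists t, forS G a t n) \/ (exists s, ~ refS G a s n).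
Proof. destruct (classic (win2 n [])) as [H|H].
  - left. exists tau. intros y Hc. apply hitL_iff. apply (lemA n 0 y); auto.
    intros i Hi Ht. apply Hc; auto. lia.
  - right. exists sigS. intros [y [Hc Hh]]. apply hitL_iff in Hh. revert Hh. apply (lemB n 0 y); auto.
    intros i Hi Ht. apply Hc; auto. lia.
Qed.
End Fin.

Lemma min_ex (P : nat -> Prop) : (exists k, P k) -> exists k, P k /\ forall j, j < k -> ~ P j.
Proof. intros [k Hk]. induction k as [k IH] using (well_founded_induction lt_wf).
  destruct (classic (exists j, j < k /\ P j)) as [[j [Hj Pj]]|H].
  - apply (IH j Hj Pj).
  - exists k. split; auto. intros j Hj Pj. apply H; eauto.
Qed.

Lemma fin_nonempty N : exists x, forall k, k <= N -> ~ BadS G a x k.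
Proof.
  destruct (classic (DS G a N)) as [HD|HD].
  - destruct (min_ex (DS G a) (ex_intro _ N HD)) as [k0 [Hk0 Hmin]].
    assert (Hk0N : k0 <= N) by (destruct (Nat.le_gt_cases k0 N); auto; exfalso; apply (Hmin N); auto).
    destruct (fin_det k0) as [[t Ht]|[s Hs]].
    2:{ exfalso. apply Hs. apply ref_ext with (sx (pt s)). intros; apply sx_pt. apply Hk0. }
    assert (Hx1 : exists x1, forall k, k < k0 -> ~ refS G a (sx x1) k).
    { destruct k0 as [|k1]. exists (fun _ => false). intros; lia.
      assert (~ DS G a k1) by (apply Hmin; lia). unfold DS in H.
      apply not_all_ex_not in H. destruct H as [x1 H1]. exists x1. intros k Hk Hr.
      apply H1. apply ref_mono with k; auto. lia. }
    destruct Hx1 as [x1 Hx1].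
    set (c := fun w => match turn G w with P1 => sx x1 w | P2 => t w end).
    exists (pt c). intros k Hk [[HnD Hr]|[HDk Hf]].
    + assert (k < k0) by (destruct (Nat.lt_ge_cases k k0); auto; exfalso; apply HnD; apply D_mono with k0; auto).
      apply (Hx1 k); auto. apply ref_ext with (sx (pt c)); auto.
      intros w Hw. rewrite sx_pt. unfold c. rewrite Hw. reflexivity.
    + assert (k0 <= k) by (destruct (Nat.lt_ge_cases k k0); auto; exfalso; apply (Hmin k); auto).
      apply Hf. apply for_ext with t. intros w Hw. rewrite sx_pt. unfold c. rewrite Hw. reflexivity.
      apply for_mono with k0; auto.
  - pose proof HD as HD0. unfold DS in HD. apply not_all_ex_not in HD. destruct HD as [x Hx].
    exists x. intros k Hk [[HnD Hr]|[HDk Hf]].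
    + apply Hx. apply ref_mono with k; auto.
    + apply HD0. apply D_mono with k; auto.
Qed.
End Game.

Fixpoint subst (d : code) (c : code) : code :=
  match c with
  | COracle => CComp d [CProj 0]
  | CComp f gs => CComp (subst d f) (map (subst d) gs)
  | CPrec f g => CPrec (subst d f) (subst d g)
  | CMin f => CMin (subst d f)
  | c => c
  end.

Section Subst.
Variables (o q : baire) (d : code).
Hypothesis Hd : forall m, eval o d [m] (q m).

Fixpoint subst_ok c xs v (H : eval q c xs v) {struct H} : eval o (subst d c) xs v
with substs_ok gs xs ys (H : evals q gs xs ys) {struct H} : evals o (map (subst d) gs) xs ys.
Proof.
  - destruct H; simpl.
    + constructor.
    + constructor.
    + constructor; auto.
    + econstructor. constructor. constructor. reflexivity. constructor. apply Hd.
    + econstructor. apply substs_ok; eauto. apply subst_ok; auto.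
    + constructor. apply subst_ok; auto.
    + econstructor. exact (subst_ok _ _ _ H). apply subst_ok; auto.
    + constructor. apply subst_ok; auto. intros m Hm. destruct (H0 m Hm) as [k Hk]. exists k.
      apply subst_ok; exact Hk.
  - destruct H; simpl.
    + constructor.
    + constructor. apply subst_ok; auto. apply substs_ok; auto.
Qed.
End Subst.

Definition ev (o : baire) : baire := fun n => o (2 * n).
Definition od (o : baire) : baire := fun n => o (2 * n + 1).

Lemma even_2n n : Nat.even (2 * n) = true.
Proof. rewrite Nat.even_mul. reflexivity. Qed.
Lemma even_2n1 n : Nat.even (2 * n + 1) = false.
Proof. rewrite Nat.add_comm, Nat.even_add_mul_2. reflexivity. Qed.

Lemma pairB_ev p s n : pairB p s (2 * n) = p n.
Proof. unfold pairB. rewrite even_2n, Nat.div2_double. reflexivity. Qed.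
Lemma pairB_od p s n : pairB p s (2 * n + 1) = s n.
Proof. unfold pairB. rewrite even_2n1, Nat.div2_odd'. reflexivity. Qed.
Lemma ev_pairB p s : ev (pairB p s) = p.
Proof. apply functional_extensionality. intro n. apply pairB_ev. Qed.
Lemma od_pairB p s : od (pairB p s) = s.
Proof. apply functional_extensionality. intro n. apply pairB_od. Qed.
Lemma pairB_evod o : pairB (ev o) (od o) = o.
Proof. apply functional_extensionality. intro n. unfold pairB, ev, od.
  pose proof (Nat.div2_odd n). rewrite <- Nat.negb_odd. destruct (Nat.odd n); simpl in *; f_equal; lia. Qed.

Definition evE := EOra (EMul (ENat 2) (EVar 0)).
Definition odE := EOra (EAdd (EMul (ENat 2) (EVar 0)) (ENat 1)).
Lemma cev_ok o m : eval o (comp 1 evE) [m] (ev o m).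
Proof. pose proof (comp_ok evE o [m]). unfold evE in *. rewrite den_ora, den_mul, den_nat in H. exact H. Qed.
Lemma cod_ok o m : eval o (comp 1 odE) [m] (od o m).
Proof. pose proof (comp_ok odE o [m]). unfold odE in *. rewrite den_ora, den_add, den_mul, !den_nat in H. exact H. Qed.

Definition selE := EAdd (EMul (ENot (EVar 0)) (EVar 1)) (EMul (EVar 0) (EVar 2)).
Definition cpair (a b : code) : code :=
  CComp (comp 3 selE) [comp 1 (EPar (EVar 0)); CComp a [comp 1 (EHalf (EVar 0))]; CComp b [comp 1 (EHalf (EVar 0))]].

Lemma cpair_ok o a b (A B : baire) : (forall m, eval o a [m] (A m)) -> (forall m, eval o b [m] (B m)) ->
  forall n, eval o (cpair a b) [n] (pairB A B n).
Proof. intros Ha Hb n. unfold cpair.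
  assert (H1 : eval o (comp 1 (EPar (EVar 0))) [n] (Nat.b2n (Nat.odd n)))
    by (pose proof (comp_ok (EPar (EVar 0)) o [n]) as H; rewrite den_par in H; exact H).
  assert (H2 : eval o (comp 1 (EHalf (EVar 0))) [n] (Nat.div2 n))
    by (pose proof (comp_ok (EHalf (EVar 0)) o [n]) as H; rewrite den_half in H; exact H).
  econstructor.
  - constructor. exact H1. constructor. econstructor. constructor. exact H2. constructor. apply Ha.
    constructor. econstructor. constructor. exact H2. constructor. apply Hb. constructor.
  - pose proof (comp_ok selE o [Nat.b2n (Nat.odd n); A (Nat.div2 n); B (Nat.div2 n)]) as H3.
    unfold selE, ENot in H3. rewrite den_add, !den_mul, den_sub, den_nat in H3.
    change (eval o (comp 3 (EAdd (EMul (ESub (ENat 1) (EVar 0)) (EVar 1)) (EMul (EVar 0) (EVar 2))))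
       [Nat.b2n (Nat.odd n); A (Nat.div2 n); B (Nat.div2 n)]
       ((1 - Nat.b2n (Nat.odd n)) * A (Nat.div2 n) + Nat.b2n (Nat.odd n) * B (Nat.div2 n))) in H3.
    unfold pairB. rewrite <- Nat.negb_odd. destruct (Nat.odd n); cbn [negb Nat.b2n] in *.
    + assert (E : (1 - 1) * A (Nat.div2 n) + 1 * B (Nat.div2 n) = B (Nat.div2 n)) by lia.
      rewrite E in H3. exact H3.
    + assert (E : (1 - 0) * A (Nat.div2 n) + 0 * B (Nat.div2 n) = A (Nat.div2 n)) by lia.
      rewrite E in H3. exact H3.
Qed.

Lemma realizes_mono X Y (f : mv X Y) F F' : realizes X Y f F -> (forall p r, F p r -> F' p r) -> realizes X Y f F'.
Proof. intros H Hm p x Hp Hd. destruct (H p x Hp Hd) as [q [Hq Hy]]. exists q; split; auto. Qed.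

Lemma W_le_trans X Y (f : mv X Y) X' Y' (g : mv X' Y') X'' Y'' (h : mv X'' Y'') :
  W_le X Y f X' Y' g -> W_le X' Y' g X'' Y'' h -> W_le X Y f X'' Y'' h.
Proof.
  intros [K1 [H1 [[sK1 [cK1 eK1]] [[sH1 [cH1 eH1]] R1]]]] [K2 [H2 [[sK2 [cK2 eK2]] [[sH2 [cH2 eH2]] R2]]]].
  exists (fun o r => exists q s', H1 (ev o) q /\ K2 (pairB q (od o)) s' /\ K1 (pairB (ev o) s') r).
  exists (fun p q3 => exists q, H1 p q /\ H2 q q3).
  split; [split|split; [split|]].
  - intros o r1 r2 [q [s [A1 [B1 C1]]]] [q' [s' [A2 [B2 C2]]]].
    assert (q = q') by (eapply sH1; eauto). subst q'.
    assert (s = s') by (eapply sK2; eauto). subst s'. eapply sK1; eauto.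
  - exists (subst (cpair (comp 1 evE)
                  (subst (cpair (subst (comp 1 evE) cH1) (comp 1 odE)) cK2)) cK1).
    intros o r [q [s [A1 [B1 C1]]]] n.
    apply (subst_ok o (pairB (ev o) s)). 2: apply eK1; auto.
    apply cpair_ok. apply cev_ok.
    intro m. apply (subst_ok o (pairB q (od o))). 2: apply eK2; auto.
    apply cpair_ok. 2: apply cod_ok.
    intro m'. apply (subst_ok o (ev o)). apply cev_ok. apply eH1; auto.
  - intros p q1 q2 [q [A1 B1]] [q' [A2 B2]]. assert (q = q') by (eapply sH1; eauto). subst q'.
    eapply sH2; eauto.
  - exists (subst cH1 cH2). intros p q3 [q [A1 B1]] n.
    apply (subst_ok p q). apply eH1; auto. apply eH2; auto.
  - intros Gr sG RG.
    set (G' := fun q s => exists q2 s2, H2 q q2 /\ Gr q2 s2 /\ K2 (pairB q s2) s).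
    assert (sG' : single_valued G').
    { intros q s1 s2 [q2 [t2 [A1 [B1 C1]]]] [q2' [t2' [A2 [B2 C2]]]].
      assert (q2 = q2') by (eapply sH2; eauto). subst q2'.
      assert (t2 = t2') by (eapply sG; eauto). subst t2'. eapply sK2; eauto. }
    specialize (R1 G' sG' (R2 Gr sG RG)).
    eapply realizes_mono; [exact R1|]. intros p r [q [s [A1 [[q2 [s2 [B1 [C1 D1]]]] E1]]]].
    exists q2, s2. split; [exists q; auto|]. split; auto.
    exists q, s. rewrite ev_pairB, od_pairB. auto.
Qed.

Lemma Kod_comp : computable (fun o r => r = od o).
Proof. split. intros o r1 r2 E1 E2; congruence.
  exists (comp 1 odE). intros o r E n. subst. apply cod_ok. Qed.

Lemma R1 : W_le ClosedGames Profiles FindWS_A ClosedGames Profiles Det_A.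
Proof.
  exists (fun o r => r = od o), (fun p q => q = p). split; [apply Kod_comp|split].
  - split. intros p q1 q2 E1 E2; congruence. exists COracle. intros p q E n; subst. constructor.
  - intros Gr sG RG p x Hp [y [Hw Hn]].
    destruct (RG p x Hp (ex_intro _ y Hn)) as [s [Hs [y' [Hy' Hn']]]].
    exists (od (pairB p s)). split. exists p, s. auto.
    exists y'. split. intro w. cbn. unfold od. rewrite pairB_od. apply Hy'. split; auto.
Qed.

Lemma konig (P : nat -> (nat -> bool) -> Prop) (L : nat -> nat) :
  (forall k x x', prefix_of x (L k) = prefix_of x' (L k) -> P k x -> P k x') ->
  (forall N, exists x, forall k, k <= N -> P k x) -> exists x, forall k, P k x.
Proof.
  intros Hdep Hfin.
  set (good := fun l : list bool => forall N, exists x, prefix_of x (length l) = l /\ forall k, k <= N -> P k x).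
  assert (Hstep : forall l, good l -> good (l ++ [true]) \/ good (l ++ [false])).
  { intros l Hl. apply NNPP. intro Hn. apply not_or_and in Hn. destruct Hn as [H1 H2].
    apply not_all_ex_not in H1. destruct H1 as [N1 H1].
    apply not_all_ex_not in H2. destruct H2 as [N2 H2].
    destruct (Hl (Nat.max N1 N2)) as [x [Hx HP]].
    assert (Hpx : prefix_of x (length (l ++ [x (length l)])) = l ++ [x (length l)]).
    { rewrite length_app. simpl. rewrite Nat.add_1_r, prefix_S, Hx. reflexivity. }
    destruct (x (length l)) eqn:E.
    - apply H1. exists x. split; auto. intros k Hk. apply HP. lia.
    - apply H2. exists x. split; auto. intros k Hk. apply HP. lia. }
  set (ch := fun l => if excluded_middle_informative (good (l ++ [true])) then true else false).
  set (f := fun (_ : nat) l => ch l).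
  assert (Hg : forall n, good (pl f n)).
  { induction n. intro N. destruct (Hfin N) as [x Hx]. exists x; split; auto.
    change (pl f (S n)) with (pl f n ++ [ch (pl f n)]). unfold ch.
    destruct (excluded_middle_informative (good (pl f n ++ [true]))); auto.
    destruct (Hstep _ IHn); tauto. }
  exists (play f). intro k. destruct (Hg (L k) k) as [x [Hx HP]].
  rewrite <- prefix_play, prefix_len in Hx. apply Hdep with x; [exact Hx|apply HP; auto].
Qed.

Lemma nash_of G a (Hcl : names_closed a (win1 G)) x : (forall n, ~ BadS G a x n) -> nash G (sx x).
Proof. intro H.
  destruct (classic (exists n0, DS G a n0)) as [[n0 HD]|HnD].
  - right. intros y Hc. simpl. intro Hwin.
    assert (Hf : forS G a (sx x) n0) by (apply NNPP; intro Hf; apply (H n0); right; auto).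
    destruct (Hf y) as [m [_ [i [_ E]]]]. intros j _ Ht; apply Hc; auto.
    apply (proj2 (Hcl y)); auto. exists m, (prefix_of y i). split; auto.
    apply is_prefix_iff. rewrite prefix_len. reflexivity.
  - left. intros y Hc. simpl. apply NNPP. intro Hw. apply (proj1 (Hcl y)) in Hw.
    destruct Hw as [m [w [E Hp]]]. apply is_prefix_iff in Hp.
    apply (H (S m + length w)). left. split. intro; apply HnD; eauto.
    exists y. split. intros i _ Ht. apply Hc; auto.
    exists m. split; [lia|]. exists (length w). split; [lia|]. rewrite Hp. exact E.
Qed.

Lemma R2 : W_le ClosedGames Profiles Det_A ClosedSets Cantor closed_choice.
Proof.
  exists (fun o r => r = od o), (fun p q => q = hfun p). split; [apply Kod_comp|split].
  - split. intros p q1 q2 E1 E2; congruence. destruct hfun_code as [e He]. exists e.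
    intros p q E n; subst. apply He.
  - intros Gr sG RG p Gm Hp Hdom. destruct Hp as [t [a [Ep [Ht Ha]]]].
    assert (Ht' : forall w, p (2 * word_code w) = player_code (turn Gm w)) by (intro; rewrite Ep, pairB_ev; auto).
    assert (Ha' : forall m, p (2 * m + 1) = a m) by (intro; rewrite Ep, pairB_od; auto).
    set (A := fun x => ~ exists m w, hfun p m = S (word_code w) /\ is_prefix w x).
    assert (HA : forall x, A x <-> forall n, ~ BadS Gm a x n).
    { intro x. unfold A. rewrite (hfun_bridge Gm p a Ht' Ha' x). split.
      - intros H n Hn. apply H; eauto.
      - intros H [n Hn]. apply (H n Hn). }
    assert (Hne : exists y, A y).
    { destruct (konig (fun k x => ~ BadS Gm a x k) (fun k => 2 ^ k - 1)) as [y Hy].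
      - intros k x x' E Hx Hx'. apply Hx. rewrite <- (Bad_bridge Gm p a Ht' Ha') in *.
        unfold vx in *. rewrite E. auto.
      - intro N. apply fin_nonempty.
      - exists y. apply HA. auto. }
    assert (Hq : names_closed (hfun p) A).
    { intro x. unfold A. split; [apply NNPP|tauto]. }
    destruct (RG (hfun p) A Hq Hne) as [s [Hs [y [Hy HAy]]]].
    exists (od (pairB p s)). split. exists (hfun p), s. auto.
    exists (sx y). split.
    + intro w. cbn. unfold od. rewrite pairB_od. apply Hy.
    + apply (nash_of Gm a Ha). apply HA. exact HAy.
Qed.

Definition stepE := EAdd (EVar 1) (EMul (EOra (EAdd (EMul (ENat 2) (EAdd (ESub (EPow2 (EVar 0)) (ENat 1)) (EVar 1))) (ENat 1))) (EPow2 (EVar 0))).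
Definition accE := ERec (EVar 0) EZero stepE.
Definition xE := EOra (EAdd (EMul (ENat 2) (EAdd (ESub (EPow2 (EVar 0)) (ENat 1)) accE)) (ENat 1)).
Definition accM (o : baire) n := recf 0 (fun i a => a + o (2 * (2 ^ i - 1 + a) + 1) * 2 ^ i) n.
Definition xM (o : baire) n := o (2 * (2 ^ n - 1 + accM o n) + 1).

Lemma den_xE o n : den o xE [n] = xM o n.
Proof. unfold xE, accE, xM, accM. dsimp. rewrite den_rec. dsimp.
  do 4 f_equal. apply recf_ext. intros i a. unfold stepE. dsimp. reflexivity. Qed.

Lemma bit_b2n b : bit b = Nat.b2n b.
Proof. destruct b; reflexivity. Qed.

Lemma pl_len f n : length (pl f n) = n.
Proof. rewrite <- prefix_play. apply prefix_len. Qed.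

Lemma R3 : W_le ClosedSets Cantor closed_choice ClosedGames Profiles FindWS_A.
Proof.
  exists (fun o r => r = xM o), (fun p q => q = pairB (fun _ => 1) p). split; [|split].
  - split. intros o r1 r2 E1 E2; congruence. exists (comp 1 xE). intros o r E n; subst.
    rewrite <- den_xE. apply (comp_ok xE o [n]).
  - split. intros p q1 q2 E1 E2; congruence. exists (cpair (comp 1 (ENat 1)) COracle).
    intros p q E n; subst. apply cpair_ok.
    + intro m. pose proof (comp_ok (ENat 1) p [m]) as H. rewrite den_nat in H. exact H.
    + intro m. constructor.
  - intros Gr sG RG p A Hp [x0 Hx0].
    set (GA := {| turn := fun _ => P1; win1 := A |}).
    assert (Hname : names_game (pairB (fun _ => 1) p) GA).
    { exists (fun _ => 1), p. split; [reflexivity|split; [intro; reflexivity|exact Hp]]. }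
    set (s0 := fun w : list bool => x0 (length w)).
    assert (Hw0 : winning GA P1 s0).
    { intros y Hc. simpl. assert (E : y = x0).
      { apply functional_extensionality. intro n. rewrite (Hc n eq_refl). unfold s0. rewrite prefix_len. reflexivity. }
      rewrite E. exact Hx0. }
    assert (Hdom : exists s, FindWS_A GA s) by (exists s0; split; [exists s0; auto|left; auto]).
    destruct (RG _ GA Hname Hdom) as [s [Hs [prof [Hprof [_ Hnash]]]]].
    set (f := fun (_ : nat) (w : list bool) => prof w).
    set (z := play f).
    exists (xM (pairB p s)). split. exists (pairB (fun _ => 1) p), s. auto.
    assert (Hacc : forall n, accM (pairB p s) n = val (pl f n) /\ xM (pairB p s) n = bit (z n)).
    { assert (Hx : forall n, accM (pairB p s) n = val (pl f n) -> xM (pairB p s) n = bit (z n)).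
      { intros n E. unfold xM. rewrite E, pairB_od. rewrite <- (pl_len f n) at 1. rewrite <- code_val.
        rewrite Hprof. reflexivity. }
      induction n. split; [reflexivity|apply Hx; reflexivity].
      destruct IHn as [IH1 IH2]. assert (E : accM (pairB p s) (S n) = val (pl f (S n))).
      { change (accM (pairB p s) (S n)) with (accM (pairB p s) n + xM (pairB p s) n * 2 ^ n).
        rewrite IH2. cbn [pl]. rewrite val_app, pl_len, <- IH1, bit_b2n. reflexivity. }
      split; auto. }
    exists z. split.
    + intro n. apply Hacc.
    + simpl. destruct Hnash as [H1|H2].
      * apply (H1 z). intros n _. unfold z. rewrite prefix_play. reflexivity.
      * exfalso. apply (H2 x0). intros n Hn. discriminate. exact Hx0.
Qed.

Theorem theorem9 :
  W_eq ClosedGames Profiles FindWS_A ClosedGames Profiles Det_A /\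
  W_eq ClosedGames Profiles Det_A ClosedSets Cantor closed_choice.
Proof.
  split; split.
  - exact R1.
  - exact (W_le_trans _ _ _ _ _ _ _ _ _ R2 R3).
  - exact R2.
  - exact (W_le_trans _ _ _ _ _ _ _ _ _ R3 R1).
Qed.
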